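(* Let $T$ be an integral domain, let $K$ be a subfield of $T$ and $M$ a nonzero maximal ideal of $T$ such that $T=K+M$. Let $k$ be a subfield of $K$ and set $R=k+M$. Then: (1) If $M$ contains an irreducible element of $T$, then $R$ is a U-FFD if and only if $T$ is a U-FFD and the quotient group $K^\times/k^\times$ is finite. (2) If $M$ contains no irreducible element of $T$, then $R$ is a U-FFD if and only if $T$ is a U-FFD.
   Context: An integral domain is a U-FFD (has the U-FF property) if every nonzero element that is a unit or a finite product of irreducible elements has only finitely many factorizations into irreducibles, counted up to order and associates. $K^\times,k^\times$ denote the multiplicative groups of the fields. *)

(* Defs.v *)
From mathcomp Require Import all_boot all_algebra.
Set Implicit Arguments. Unset Strict Implicit. Unset Printing Implicit Defensive.
Import GRing.Theory.
Local Open Scope ring_scope.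

Section Defs.
Variable T : idomainType.

Definition is_subfield (S : T -> Prop) : Prop :=
  [/\ S 0, S 1,
      (forall x y, S x -> S y -> S (x - y)),
      (forall x y, S x -> S y -> S (x * y)) &
      (forall x, S x -> x != 0 -> exists2 y, S y & x * y = 1)].

Definition is_ideal (M : T -> Prop) : Prop :=
  [/\ M 0,
      (forall x y, M x -> M y -> M (x + y)) &
      (forall t x, M x -> M (t * x))].

Definition is_maximal_ideal (M : T -> Prop) : Prop :=
  [/\ is_ideal M, ~ M 1 &
      (forall J : T -> Prop, is_ideal J -> (forall x, M x -> J x) ->
         (forall x, J x -> M x) \/ J 1)].

Definition unit_in (S : T -> Prop) (x : T) : Prop :=
  S x /\ exists2 y, S y & x * y = 1.

Definition assoc_in (S : T -> Prop) (x y : T) : Prop :=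
  exists2 u, unit_in S u & x = u * y.

Definition irreducible_in (S : T -> Prop) (x : T) : Prop :=
  [/\ S x, x != 0, ~ unit_in S x &
      (forall a b, S a -> S b -> x = a * b -> unit_in S a \/ unit_in S b)].

(* a factorization of x in S: a list of irreducibles of S whose product is
   x up to a unit of S (units have the empty factorization) *)
Definition factorization_in (S : T -> Prop) (x : T) (l : seq T) : Prop :=
  (forall a, a \in l -> irreducible_in S a) /\ assoc_in S x (\prod_(a <- l) a).

Definition fact_equiv (S : T -> Prop) (l1 l2 : seq T) : Prop :=
  exists2 l2', perm_eq l2' l2 &
    size l1 = size l2' /\
    forall i, (i < size l1)%N -> assoc_in S (nth 0 l1 i) (nth 0 l2' i).

Definition finitely_many_factorizations (S : T -> Prop) (x : T) : Prop :=
  exists L : seq (seq T),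
    forall l, factorization_in S x l -> exists2 l', l' \in L & fact_equiv S l l'.

Definition UFFD (S : T -> Prop) : Prop :=
  forall x, S x -> x != 0 ->
    (unit_in S x \/
     exists l : seq T, (forall a, a \in l -> irreducible_in S a) /\ x = \prod_(a <- l) a) ->
    finitely_many_factorizations S x.

Definition sum_set (k M : T -> Prop) (x : T) : Prop :=
  exists a m, [/\ k a, M m & x = a + m].

Definition finite_unit_quotient (K k : T -> Prop) : Prop :=
  exists cs : seq T,
    forall a, K a -> a != 0 ->
      exists c b, [/\ c \in cs, k b, b != 0 & a = c * b].

End Defs.

(* Main.v *)
Require Import Defs.
From mathcomp Require Import all_boot all_algebra ring.
From Stdlib Require Import Classical.
Import GRing.Theory.
Local Open Scope ring_scope.

Section Main.
Variable T : idomainType.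
Variables K M k : T -> Prop.
Hypothesis HK : is_subfield K.
Hypothesis HM : is_maximal_ideal M.
Hypothesis Hdec : forall t, sum_set K M t.
Hypothesis Hk : is_subfield k.
Hypothesis Hkk : forall x, k x -> K x.

Local Notation R := (sum_set k M).
Local Notation TT := (fun _ : T => True).

Lemma M0 : M 0. Proof. by case: HM => [[H _ _] _ _]. Qed.
Lemma MD x y : M x -> M y -> M (x+y). Proof. by case: HM => [[_ H _] _ _]; apply: H. Qed.
Lemma MMl t x : M x -> M (t*x). Proof. by case: HM => [[_ _ H] _ _]; apply: H. Qed.
Lemma MMr t x : M x -> M (x*t). Proof. rewrite mulrC; exact: MMl. Qed.
Lemma MN x : M x -> M (-x). Proof. rewrite -mulN1r; exact: MMl. Qed.
Lemma MB x y : M x -> M y -> M (x - y). Proof. move=> ??; apply: MD => //; exact: MN. Qed.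
Lemma M1 : ~ M 1. Proof. by case: HM => _ H _. Qed.
Lemma M_unit x : x \is a GRing.unit -> ~ M x.
Proof. move=> xu Mx; apply: M1; rewrite -(mulVr xu); exact: MMl. Qed.

Lemma SF0 (S : T -> Prop) : is_subfield S -> S 0. Proof. by case. Qed.
Lemma SF1 (S : T -> Prop) : is_subfield S -> S 1. Proof. by case. Qed.
Lemma SFB (S : T -> Prop) x y : is_subfield S -> S x -> S y -> S (x - y). Proof. by case=> _ _ h _ _; apply: h. Qed.
Lemma SFM (S : T -> Prop) x y : is_subfield S -> S x -> S y -> S (x * y). Proof. by case=> _ _ _ h _; apply: h. Qed.
Lemma SFN (S : T -> Prop) x : is_subfield S -> S x -> S (- x).
Proof. move=> H Sx; rewrite -sub0r; apply: SFB => //; exact: SF0. Qed.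
Lemma SFD (S : T -> Prop) x y : is_subfield S -> S x -> S y -> S (x + y).
Proof. move=> H Sx Sy; rewrite -[y]opprK; apply: SFB => //; exact: SFN. Qed.
Lemma SFU (S : T -> Prop) x : is_subfield S -> S x -> x != 0 -> x \is a GRing.unit.
Proof. case=> _ _ _ _ h Sx x0; have [y _ e] := h x Sx x0; apply/unitrPr; by exists y. Qed.
Lemma SFV (S : T -> Prop) x : is_subfield S -> S x -> x != 0 -> S x^-1.
Proof.
case=> a b c d h Sx x0; have [y Sy e] := h x Sx x0.
have xu : x \is a GRing.unit by apply/unitrPr; exists y.
suff -> : x^-1 = y by [].
by rewrite -[x^-1]mulr1 -e mulrA mulVr // mul1r.
Qed.

Arguments M_unit {x}. Arguments MMl t {x}. Arguments MMr t {x}. Arguments MD {x y}. Arguments MN {x}. Arguments MB {x y}. Arguments SF0 {S}. Arguments SF1 {S}. Arguments SFB {S x y}. Arguments SFM {S x y}.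
Arguments SFN {S x}. Arguments SFD {S x y}. Arguments SFU {S x}. Arguments SFV {S x}.

Lemma KM0 a : K a -> M a -> a = 0.
Proof.
move=> Ka Ma; have [//|a0] := eqVneq a 0.
by case: (M_unit (SFU HK Ka a0) Ma).
Qed.

Lemma dec_uniq a b m n : K a -> K b -> M m -> M n -> a + m = b + n -> a = b.
Proof.
move=> Ka Kb Mm Mn e; apply/eqP; rewrite -subr_eq0; apply/eqP; apply: KM0.
  exact: SFB.
have : (a - b) - (n - m) = (a + m) - (b + n) by ring.
rewrite e subrr => /eqP; rewrite subr_eq0 => /eqP ->.
exact: MB.
Qed.

Arguments dec_uniq {a b m n}.
Arguments KM0 {a}.

Lemma R_M x : M x -> R x. Proof. move=> Mx; exists 0, x; split=> //; [exact: SF0 | by rewrite add0r]. Qed.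
Lemma R_k x : k x -> R x. Proof. move=> kx; exists x, 0; split=> //; [exact: M0 | by rewrite addr0]. Qed.

Lemma dec_mul a m b n : M m -> M n -> M (a*n + m*(b+n)) /\ (a+m)*(b+n) = a*b + (a*n + m*(b+n)).
Proof. move=> Mm Mn; split; last by ring. apply: MD; [exact: MMl | exact: MMr]. Qed.

Arguments dec_mul a {m} b {n}.

Lemma R_mul x y : R x -> R y -> R (x*y).
Proof.
move=> [a [m [ka Mm ->]]] [b [n [kb Mn ->]]].
have [H1 H2] := dec_mul a b Mm Mn.
exists (a*b), (a*n + m*(b+n)); split=> //; exact: SFM.
Qed.

Lemma kpart_mul x y a m b n c p : K a -> K b -> K c -> M m -> M n -> M p ->
  x = a + m -> y = b + n -> x * y = c + p -> c = a * b.
Proof.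
move=> Ka Kb Kc Mm Mn Mp -> -> e.
have [H1 H2] := dec_mul a b Mm Mn.
symmetry; apply: (dec_uniq (SFM HK Ka Kb) Kc H1 Mp); by rewrite -H2.
Qed.

Arguments kpart_mul {x y a m b n c p}.

Lemma unitR_iff x : unit_in R x <-> R x /\ x \is a GRing.unit.
Proof.
split.
  by move=> [Rx [y _ e]]; split=> //; apply/unitrPr; exists y.
move=> [Rx xu]; split=> //.
have Rx' := Rx; move: Rx' => [b [m [kb Mm ex]]].
have [c [n [Kc Mn ey]]] := Hdec x^-1.
have bc : c = b^-1 * 1.
  have := kpart_mul (Hkk _ kb) Kc (SF1 HK) Mm Mn M0 ex ey.
  rewrite (mulrV xu) addr0 => /(_ erefl) e.
  have b0 : b != 0 by apply/eqP=> b0; move: e; rewrite b0 mul0r => /eqP; by rewrite oner_eq0.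
  have bu : b \is a GRing.unit := SFU Hk kb b0.
  by rewrite e mulrA mulVr // mul1r.
exists x^-1; last exact: mulrV.
exists c, n; split=> //.
rewrite bc mulr1; apply: SFV => //.
apply/eqP=> b0; move: bc; rewrite b0 invr0 mul0r => c0.
have xiu : x^-1 \is a GRing.unit by rewrite unitrV.
by case: (M_unit xiu); rewrite ey c0 add0r.
Qed.

Lemma unitT_iff x : unit_in TT x <-> x \is a GRing.unit.
Proof.
split; first by move=> [_ [y _ e]]; apply/unitrPr; exists y.
by move=> xu; split=> //; exists x^-1 => //; rewrite mulrV.
Qed.

Lemma unit_neq0 (u : T) : u \is a GRing.unit -> u != 0.
Proof. by move=> uu; apply/eqP=> u0; move: uu; rewrite u0 unitr0. Qed.

Lemma irrT_unit y u : irreducible_in TT y -> u \is a GRing.unit -> irreducible_in TT (u*y).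
Proof.
move=> [_ y0 ynu yf] uu; split=> //.
- by rewrite mulf_neq0 // unit_neq0.
- by rewrite unitT_iff (unitrMr y uu) => h; apply: ynu; apply/unitT_iff.
- move=> a b _ _ e.
  have ey : y = (u^-1 * a) * b by rewrite -mulrA -e mulrA mulVr // mul1r.
  have uiu : u^-1 \is a GRing.unit by rewrite unitrV.
  case: (yf _ _ I I ey) => /unitT_iff h; [left|right]; apply/unitT_iff => //.
  by rewrite -(unitrMr a uiu).
Qed.

Lemma irrT_R x : R x -> irreducible_in TT x -> irreducible_in R x.
Proof.
move=> Rx [_ x0 xnu xf]; split=> //.
- by move/unitR_iff => [_ xu]; apply: xnu; apply/unitT_iff.
- move=> a b Ra Rb e; case: (xf a b I I e) => /unitT_iff h; [left|right]; exact/unitR_iff.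
Qed.

Lemma fact_norm x a b : R x -> x = a*b -> ~ M a -> exists a' b',
  [/\ R a', R b', x = a'*b', (a' \is a GRing.unit) = (a \is a GRing.unit)
    & (b' \is a GRing.unit) = (b \is a GRing.unit)].
Proof.
move=> Rx e nMa.
have [c [m [Kc Mm ea]]] := Hdec a.
have c0 : c != 0 by apply/eqP=> c0; apply: nMa; rewrite ea c0 add0r.
have cu : c \is a GRing.unit := SFU HK Kc c0.
have ciu : c^-1 \is a GRing.unit by rewrite unitrV.
have [d [n [Kd Mn eb]]] := Hdec b.
exists (c^-1 * a), (c * b).
have ea' : c^-1 * a = 1 + c^-1 * m by rewrite ea mulrDr mulVr.
have eb' : c * b = c * d + c * n by rewrite eb mulrDr.
have ex : x = (c^-1 * a) * (c * b).
  by rewrite e mulrA [c^-1 * a * c]mulrC mulrA mulrV // mul1r.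
have [e0 [p [ke Mp ex']]] := Rx.
have cde : e0 = 1 * (c * d).
  apply: (kpart_mul (SF1 HK) (SFM HK Kc Kd) (Hkk _ ke) (MMl c^-1 Mm) (MMl c Mn) Mp ea' eb').
  by rewrite -ex -ex'.
split=> //.
- exists 1, (c^-1 * m); split=> //; [exact: SF1 | exact: MMl].
- exists (c * d), (c * n); split=> //; [by rewrite -(mul1r (c * d)) -cde | exact: MMl].
- by rewrite unitrMr.
- by rewrite unitrMr.
Qed.

Arguments fact_norm {x a b}. Arguments R_M {x}. Arguments R_k {x}. Arguments R_mul {x y}.

Lemma irrR_T x : irreducible_in R x -> irreducible_in TT x.
Proof.
move=> [Rx x0 xnu xf]; split=> //.
  by move/unitT_iff => xu; apply: xnu; apply/unitR_iff.
move=> a b _ _ e; rewrite !unitT_iff.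
have [nMa|/NNPP Ma] := classic (~ M a).
  have [a' [b' [Ra' Rb' e' ha hb]]] := fact_norm Rx e nMa.
  by case: (xf _ _ Ra' Rb' e') => /unitR_iff [_ h]; [left; rewrite -ha | right; rewrite -hb].
have [nMb|/NNPP Mb] := classic (~ M b).
  have e2 : x = b * a by rewrite mulrC.
  have [a' [b' [Ra' Rb' e' ha hb]]] := fact_norm Rx e2 nMb.
  by case: (xf _ _ Ra' Rb' e') => /unitR_iff [_ h]; [right; rewrite -ha | left; rewrite -hb].
by case: (xf _ _ (R_M Ma) (R_M Mb) e) => /unitR_iff [_ h]; [left|right].
Qed.

Lemma assocT_iff x y : assoc_in TT x y <-> exists2 u, u \is a GRing.unit & x = u*y.
Proof.
split; first by move=> [u /unitT_iff uu e]; exists u.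
by move=> [u uu e]; exists u => //; apply/unitT_iff.
Qed.

Lemma assocT_sym x y : assoc_in TT x y -> assoc_in TT y x.
Proof.
move/assocT_iff=> [u uu e]; apply/assocT_iff; exists u^-1; first by rewrite unitrV.
by rewrite e mulrA mulVr // mul1r.
Qed.

Lemma assocT_trans x y z : assoc_in TT x y -> assoc_in TT y z -> assoc_in TT x z.
Proof.
move/assocT_iff=> [u uu e] /assocT_iff [v vu e']; apply/assocT_iff; exists (u * v).
  by rewrite unitrMr. by rewrite e e' mulrA.
Qed.

Lemma assocR_T x y : assoc_in R x y -> assoc_in TT x y.
Proof. by move=> [u /unitR_iff [_ uu] e]; apply/assocT_iff; exists u. Qed.

Lemma irr_neq0 (S : T -> Prop) x : irreducible_in S x -> x != 0. Proof. by case. Qed.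
Lemma irrR_R x : irreducible_in R x -> R x. Proof. by case. Qed.

Arguments irrT_R {x}. Arguments assocT_trans {x y z}. Arguments assocT_sym {x y}. Arguments assocR_T {x y}. Arguments irrR_R {x}. Arguments irr_neq0 {S x}. Arguments irrT_unit {y u}. Arguments irrR_T {x}.

Lemma lemA l : (forall a, a \in l -> irreducible_in TT a) ->
  forall x u, R x -> u \is a GRing.unit -> x = u * \prod_(a <- l) a ->
  exists r, [/\ (forall a, a \in r -> irreducible_in R a),
     assoc_in R x (\prod_(a <- r) a), size r = size l &
     forall i, (i < size l)%N -> assoc_in TT (nth 0 r i) (nth 0 l i)].
Proof.
elim: l => [|y l IH] Hl x u Rx uu ex.
  exists [::]; split=> //; rewrite big_nil; exists x; last by rewrite mulr1.
  by apply/unitR_iff; split=> //; rewrite ex big_nil mulr1.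
have Hy : irreducible_in TT y by apply: Hl; rewrite inE eqxx.
have Hl' : forall a, a \in l -> irreducible_in TT a by move=> a h; apply: Hl; rewrite inE h orbT.
rewrite big_cons in ex.
have key : forall v y' x'' u'', v \is a GRing.unit -> y' = v * y -> irreducible_in R y' ->
   R x'' -> u'' \is a GRing.unit -> x'' = u'' * \prod_(a <- l) a -> x = y' * x'' ->
   exists r, [/\ (forall a, a \in r -> irreducible_in R a),
     assoc_in R x (\prod_(a <- r) a), size r = size (y :: l) &
     forall i, (i < size (y :: l))%N -> assoc_in TT (nth 0 r i) (nth 0 (y :: l) i)].
  move=> v y' x'' u'' vu ey' Iy' Rx'' uu'' ex'' exx.
  have [r [Ir [w wu exw] sr Hr]] := IH Hl' x'' u'' Rx'' uu'' ex''.
  exists (y' :: r); split.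
  - by move=> a; rewrite inE => /orP [/eqP -> | /Ir].
  - by rewrite big_cons; exists w => //; rewrite exx exw mulrCA.
  - by rewrite /= sr.
  - case=> [|i] /= hi; last exact: Hr.
    by apply/assocT_iff; exists v.
have [d [n [Kd Mn ey]]] := Hdec y.
have [d0|dn0] := eqVneq d 0.
  have My : M y by rewrite ey d0 add0r.
  have [f [q [Kf Mq ez]]] := Hdec (u * \prod_(a <- l) a).
  have [f0|fn0] := eqVneq f 0.
    have Mz : M (u * \prod_(a <- l) a) by rewrite ez f0 add0r.
    apply: (key 1 y _ u (unitr1 _) (esym (mul1r y)) (irrT_R (R_M My) Hy) (R_M Mz) uu erefl).
    by rewrite ex mulrCA.
  have fu : f \is a GRing.unit := SFU HK Kf fn0.
  have fiu : f^-1 \is a GRing.unit by rewrite unitrV.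
  have Rx'' : R (f^-1 * (u * \prod_(a <- l) a)).
    exists 1, (f^-1 * q); split; [exact: SF1 | exact: MMl | ].
    by rewrite ez mulrDr mulVr.
  have uu' : f^-1 * u \is a GRing.unit by rewrite unitrMr.
  apply: (key f (f * y) _ (f^-1 * u) fu erefl (irrT_R (R_M (MMl f My)) (irrT_unit Hy fu)) Rx'' uu').
    by rewrite mulrA.
  by rewrite ex -[LHS]mul1r -(mulrV fu); ring.
have du : d \is a GRing.unit := SFU HK Kd dn0.
have diu : d^-1 \is a GRing.unit by rewrite unitrV.
have ey' : d^-1 * y = 1 + d^-1 * n by rewrite ey mulrDr mulVr.
have Ry' : R (d^-1 * y).
  by exists 1, (d^-1 * n); split; [exact: SF1 | exact: MMl | ].
have [g [r0 [Kg Mr0 ex'']]] := Hdec ((u * d) * \prod_(a <- l) a).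
have exx : x = (d^-1 * y) * ((u * d) * \prod_(a <- l) a).
  by rewrite ex -[LHS]mul1r -(mulrV du); ring.
have Rx'' : R ((u * d) * \prod_(a <- l) a).
  have [b [p [kb Mp exb]]] := Rx.
  have gb : b = 1 * g.
    apply: (kpart_mul (SF1 HK) Kg (Hkk _ kb) (MMl d^-1 Mn) Mr0 Mp ey' ex'').
    by rewrite -exx.
  by exists g, r0; split=> //; rewrite -(mul1r g) -gb.
have uu' : u * d \is a GRing.unit by rewrite unitrMr.
exact: (key d^-1 (d^-1 * y) _ (u * d) diu erefl (irrT_R Ry' (irrT_unit Hy diu)) Rx'' uu' erefl exx).
Qed.

Arguments lemA {l} _ {x u}.

Lemma R_to_T : UFFD R -> UFFD TT.
Proof.
move=> HR x _ x0 Hx.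
have [g [gu Rgx]] : exists g, g \is a GRing.unit /\ R (g*x).
  have [c [m [Kc Mm ex]]] := Hdec x.
  have [c0|cn0] := eqVneq c 0.
    by exists 1; split; [exact: unitr1 | apply: R_M; rewrite mul1r ex c0 add0r].
  have cu : c \is a GRing.unit := SFU HK Kc cn0.
  exists c^-1; split; first by rewrite unitrV.
  exists 1, (c^-1 * m); split; [exact: SF1 | exact: MMl | by rewrite ex mulrDr mulVr].
have gx0 : g*x != 0 by rewrite mulf_neq0 // unit_neq0.
have HRx : unit_in R (g*x) \/ exists l, (forall a, a \in l -> irreducible_in R a) /\ g*x = \prod_(a<-l) a.
  case: Hx => [/unitT_iff xu | [l [Il el]]].
    by left; apply/unitR_iff; split => //; rewrite unitrMr.
  have [r [Ir [w wu ew] _ _]] := lemA Il Rgx gu (congr1 (fun t => g * t) el).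
  case: r Ir ew => [|a r] Ir ew.
    by left; rewrite ew big_nil mulr1.
  right; exists (w*a :: r); split.
    move=> b; rewrite inE => /orP [/eqP -> | h]; last by apply: Ir; rewrite inE h orbT.
    have Ia : irreducible_in R a by apply: Ir; rewrite mem_head.
    have [Rw wu'] := (unitR_iff w).1 wu.
    exact: irrT_R (R_mul Rw (irrR_R Ia)) (irrT_unit (irrR_T Ia) wu').
  by rewrite ew !big_cons mulrA.
have [L HL] := HR (g*x) Rgx gx0 HRx.
exists L; move=> l [Il [u /unitT_iff uu eu]].
have guu : g * u \is a GRing.unit by rewrite unitrMr.
have egx : g * x = (g * u) * \prod_(a <- l) a by rewrite eu mulrA.
have [r [Ir ar sr Hr]] := lemA Il Rgx guu egx.
have [l' l'L [l2 pl2 [sr2 H2]]] := HL r (conj Ir ar).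
exists l'; first by []. exists l2; first by []. split; first by rewrite -sr.
move=> i hi; apply: assocT_trans (assocT_sym (Hr i hi)) _.
by apply: assocR_T; apply: H2; rewrite sr.
Qed.

Lemma cs_exists p : p != 0 -> forall s : seq T, exists cs : seq T, forall y, y \in s ->
  forall a, K a -> a != 0 -> assoc_in R (a*p) y ->
  exists c b, [/\ c \in cs, k b, b != 0 & a = c * b].
Proof.
move=> p0; elim=> [|y s [cs IH]]; first by exists [::].
have [[a0 [Ka0 [a00 [u0 u0R e0]]]]|no] := classic (exists a0, K a0 /\ a0 != 0 /\ assoc_in R (a0*p) y).
  exists (a0 :: cs) => y'; rewrite inE => /orP [/eqP -> | hy] a Ka a0' H; last first.
    by have [c [b [cs' kb b0 e]]] := IH y' hy a Ka a0' H; exists c, b; rewrite inE cs' orbT.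
  move: H => [u uR e].
  have h1 : a*u0*p = u0*(u*y) by rewrite -e; ring.
  have h2 : u*a0*p = u*(u0*y) by rewrite -e0; ring.
  have h3 : u0*(u*y) = u*(u0*y) by ring.
  have hk : a * u0 = u * a0 := mulIf p0 (etrans h1 (etrans h3 (esym h2))).
  have [[b [m [kb Mm eu]]] uu] := (unitR_iff u).1 uR.
  have [[b0 [m0 [kb0 Mm0 eu0]]] u0u] := (unitR_iff u0).1 u0R.
  have b00 : b0 != 0 by apply/eqP=> b00; apply: (M_unit u0u); rewrite eu0 b00 add0r.
  have bn0 : b != 0 by apply/eqP=> bn0; apply: (M_unit uu); rewrite eu bn0 add0r.
  have hb : a * b0 = b * a0.
    apply: (dec_uniq (SFM HK Ka (Hkk _ kb0)) (SFM HK (Hkk _ kb) Ka0) (MMl a Mm0) (MMr a0 Mm)).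
    by rewrite -mulrDr -mulrDl -eu -eu0.
  have b0u : b0 \is a GRing.unit := SFU Hk kb0 b00.
  exists a0, (b * b0^-1); split.
  - by rewrite mem_head.
  - exact: SFM Hk kb (SFV Hk kb0 b00).
  - by rewrite mulf_neq0 // invr_neq0.
  - by apply: (mulIf b00); rewrite hb -!mulrA mulVr // mulr1 mulrC.
exists cs => y'; rewrite inE => /orP [/eqP -> | hy] a Ka a0' H.
  by case: no; exists a.
exact: (IH y' hy a Ka a0' H).
Qed.

Arguments cs_exists {p}.

Lemma R_to_quot p : M p -> irreducible_in TT p -> UFFD R -> finite_unit_quotient K k.
Proof.
move=> Mp Hp HR.
have Rp := R_M Mp; have Ip := irrT_R Rp Hp; have p0 := irr_neq0 Hp.
have Hpp : unit_in R (p*p) \/ exists l, (forall a, a \in l -> irreducible_in R a) /\ p*p = \prod_(a<-l) a.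
  right; exists [:: p; p]; split; last by rewrite !big_cons big_nil mulr1.
  by move=> a; rewrite !inE orbb => /eqP ->.
have [L HL] := HR (p*p) (R_mul Rp Rp) (mulf_neq0 p0 p0) Hpp.
have [cs Hcs] := cs_exists p0 (flatten L).
exists cs => a Ka a0.
have au : a \is a GRing.unit := SFU HK Ka a0.
have aiu : a^-1 \is a GRing.unit by rewrite unitrV.
have Fa : factorization_in R (p*p) [:: a*p; a^-1*p].
  split.
    move=> b; rewrite !inE => /orP [/eqP -> | /eqP ->].
      exact: irrT_R (R_M (MMl a Mp)) (irrT_unit Hp au).
    exact: irrT_R (R_M (MMl a^-1 Mp)) (irrT_unit Hp aiu).
  exists 1; first by apply/unitR_iff; split; [exact: R_k (SF1 Hk) | exact: unitr1].
  by rewrite !big_cons big_nil !mul1r mulr1 mulrACA mulrV // mul1r.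
have [l' l'L [l2 pl2 [s2 H2]]] := HL _ Fa.
have H0 := H2 0%N erefl.
have hy : nth 0 l2 0 \in flatten L.
  apply/flattenP; exists l' => //; rewrite -(perm_mem pl2); apply: mem_nth; by rewrite -s2.
exact: Hcs _ hy a Ka a0 H0.
Qed.

Definition Pcs (cs : seq T) := forall y, M y -> irreducible_in TT y -> forall a, K a -> a != 0 ->
  exists c b, [/\ c \in cs, k b, b != 0 & a = c * b].

Lemma lemB cs : Pcs cs -> forall y, exists Cy : seq T, forall l u,
  irreducible_in TT l -> R l -> u \is a GRing.unit -> l = u * y ->
  exists2 z, z \in Cy & assoc_in R l z.
Proof.
move=> Hcs y.
have [Iy|nIy] := classic (irreducible_in TT y); last first.
  exists [::] => l u Il _ uu e; exfalso; apply: nIy.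
  have uiu : u^-1 \is a GRing.unit by rewrite unitrV.
  have -> : y = u^-1 * l by rewrite e mulrA mulVr // mul1r.
  exact: irrT_unit Il uiu.
have [d [n [Kd Mn ey]]] := Hdec y.
have [d0|dn0] := eqVneq d 0; last first.
  have du : d \is a GRing.unit := SFU HK Kd dn0.
  have ey' : d^-1 * y = 1 + d^-1 * n by rewrite ey mulrDr mulVr.
  exists [:: d^-1 * y] => l u Il Rl uu e; exists (d^-1 * y); first by rewrite mem_head.
  have el : l = (u * d) * (d^-1 * y) by rewrite e mulrA -(mulrA u) mulrV // mulr1.
  exists (u * d); last exact: el.
  apply/unitR_iff; split; last by rewrite unitrMr.
  have [g [r0 [Kg Mr0 eg]]] := Hdec (u * d).
  have [b [p [kb Mp eb]]] := Rl.
  have gb : b = g * 1.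
    apply: (kpart_mul Kg (SF1 HK) (Hkk _ kb) Mr0 (MMl d^-1 Mn) Mp eg ey').
    by rewrite -el.
  by exists g, r0; split=> //; rewrite -(mulr1 g) -gb.
have My : M y by rewrite ey d0 add0r.
exists [seq c0 * y | c0 <- cs] => l u Il Rl uu e.
have [f [q [Kf Mq eu]]] := Hdec u.
have f0 : f != 0 by apply/eqP=> f0; apply: (M_unit uu); rewrite eu f0 add0r.
have fu : f \is a GRing.unit := SFU HK Kf f0.
have [c [b [cin kb b0 fe]]] := Hcs y My Iy f Kf f0.
exists (c * y); first exact: map_f.
have bu : b \is a GRing.unit := SFU Hk kb b0.
exists (b * f^-1 * u).
  apply/unitR_iff; split; last by rewrite !unitrMr // unitrV.
  exists b, (b * f^-1 * q); split => //; first exact: MMl.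
  by rewrite eu mulrDr -mulrA mulVr // mulr1.
by rewrite e -[LHS]mul1r -(mulrV fu) fe; ring.
Qed.

Arguments lemB {cs}.

Lemma lemC cs : Pcs cs -> forall s : seq T, exists Ls : seq (seq T), forall l,
  size l = size s ->
  (forall i, (i < size s)%N -> [/\ irreducible_in TT (nth 0 l i), R (nth 0 l i)
        & assoc_in TT (nth 0 l i) (nth 0 s i)]) ->
  exists2 l3, l3 \in Ls & size l3 = size l /\
     forall i, (i < size l)%N -> assoc_in R (nth 0 l i) (nth 0 l3 i).
Proof.
move=> Hcs; elim=> [|y s [Ls' IH]].
  exists [:: [::]] => l /size0nil -> _; exists [::]; first by rewrite mem_head.
  by split.
have [Cy HCy] := lemB Hcs y.
exists (allpairs (@cons T) Cy Ls') => l.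
case: l => [|a l] //= [sl] H.
have [Ia Ra /assocT_iff [u uu e]] := H 0%N erefl.
have [z zin az] := HCy a u Ia Ra uu e.
have [l3 l3in [s3 H3]] := IH l sl (fun i hi => H i.+1 hi).
exists (z :: l3); first exact: (allpairs_f (@cons T) zin l3in).
split; first by rewrite /= s3.
by case=> [|i] //= hi; apply: H3.
Qed.

Arguments lemC {cs}.

Lemma lemD cs : Pcs cs -> forall Ss : seq (seq T), exists Big : seq (seq T), forall s, s \in Ss -> forall l,
  size l = size s ->
  (forall i, (i < size s)%N -> [/\ irreducible_in TT (nth 0 l i), R (nth 0 l i)
        & assoc_in TT (nth 0 l i) (nth 0 s i)]) ->
  exists2 l3, l3 \in Big & size l3 = size l /\
     forall i, (i < size l)%N -> assoc_in R (nth 0 l i) (nth 0 l3 i).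
Proof.
move=> Hcs; elim=> [|s Ss [Big IH]]; first by exists [::].
have [Ls HLs] := lemC Hcs s.
exists (Ls ++ Big) => s'; rewrite inE => /orP [/eqP -> | hs] l sl H.
  by have [l3 l3in HH] := HLs l sl H; exists l3 => //; rewrite mem_cat l3in.
by have [l3 l3in HH] := IH s' hs l sl H; exists l3 => //; rewrite mem_cat l3in orbT.
Qed.

Arguments lemD {cs}.

Lemma T_to_R cs : Pcs cs -> UFFD TT -> UFFD R.
Proof.
move=> Hcs HT x Rx x0 Hx.
have HTx : unit_in TT x \/ exists l, (forall a, a \in l -> irreducible_in TT a) /\ x = \prod_(a<-l) a.
  case: Hx => [/unitR_iff [_ xu] | [l [Il el]]]; first by left; apply/unitT_iff.
  by right; exists l; split=> // a /Il /irrR_T.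
have [L HL] := HT x I x0 HTx.
have [Big HB] := lemD Hcs (flatten (map (@permutations T) L)).
exists Big => l [Il [w wR ew]].
have Fl : factorization_in TT x l.
  split; first by move=> a /Il /irrR_T.
  by apply: assocR_T; exists w.
have [l' l'L [l2 pl2 [s2 H2]]] := HL l Fl.
have hin : l2 \in flatten (map (@permutations T) L).
  by apply/flattenP; exists (permutations l'); [exact: map_f | rewrite mem_permutations].
have Hi : forall i, (i < size l2)%N -> [/\ irreducible_in TT (nth 0 l i), R (nth 0 l i)
        & assoc_in TT (nth 0 l i) (nth 0 l2 i)].
  move=> i hi; have hl : nth 0 l i \in l by apply: mem_nth; rewrite s2.
  split; [exact: irrR_T (Il _ hl) | exact: irrR_R (Il _ hl) | apply: H2; by rewrite s2].
have [l3 l3in [s3 H3]] := HB l2 hin l s2 Hi.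
exists l3; first by [].
exists l3; first exact: perm_refl.
split; first by rewrite s3.
exact: H3.
Qed.

End Main.

Theorem mainTheorem5 (T : idomainType) (K M k : T -> Prop) :
  is_subfield K ->
  is_maximal_ideal M ->
  (exists m, M m /\ m != 0) ->
  (forall t, sum_set K M t) ->
  is_subfield k ->
  (forall x, k x -> K x) ->
  ((exists p, M p /\ irreducible_in (fun _ : T => True) p) ->
     (UFFD (sum_set k M) <-> UFFD (fun _ : T => True) /\ finite_unit_quotient K k))
  /\
  (~ (exists p, M p /\ irreducible_in (fun _ : T => True) p) ->
     (UFFD (sum_set k M) <-> UFFD (fun _ : T => True))).
Proof.
move=> HK HM _ Hdec Hk Hkk; split.
  move=> [p [Mp Ip]]; split.
    move=> HR; split; first exact: (R_to_T _ _ _ _ HK HM Hdec Hk Hkk HR).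
    exact: (R_to_quot _ _ _ _ HK HM Hdec Hk Hkk p Mp Ip HR).
  move=> [HT [cs Hcs]]; apply: (T_to_R _ _ _ _ HK HM Hdec Hk Hkk cs) => //.
  by move=> y _ _ a Ka a0; apply: Hcs.
move=> nP; split; first exact: (R_to_T _ _ _ _ HK HM Hdec Hk Hkk).
apply: (T_to_R _ _ _ _ HK HM Hdec Hk Hkk [::]).
by move=> y My Iy; case: nP; exists y.
Qed.
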